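(* Let $\mathcal{S}$ be a periodic symbol sequence of period $n$. Suppose $I-M_{\mathcal{S}^{\overline0}}$ is nonsingular, $I-M_{\mathcal{S}}$ and $P_{\mathcal{S}}$ are singular, $\mu\ne0$, and $\varrho^{\mathsf T}B\ne0$. Then $P_{\mathcal{S}^{(i)}}$ is singular for all $i$.
   Context: $A_L,A_R$ are real $N\times N$ matrices ($N\ge2$) with $A_R=A_L+Ce_1^{\mathsf T}$ for some $C\in\mathbb{R}^N$; $B\in\mathbb{R}^N$, $\mu\in\mathbb{R}$; $\varrho^{\mathsf T}=e_1^{\mathsf T}\mathrm{adj}(I-A_L)$. A periodic sequence $\mathcal{S}:\mathbb{Z}\to\{L,R\}$ of period $n$ is identified with $\mathcal{S}_0\cdots\mathcal{S}_{n-1}$; $\mathcal{S}^{(i)}_j=\mathcal{S}_{i+j}$; $\mathcal{S}^{\overline0}$ differs from $\mathcal{S}$ exactly at indices $\equiv0\pmod n$. $M_{\mathcal{S}}=A_{\mathcal{S}_{n-1}}\cdots A_{\mathcal{S}_0}$ and $P_{\mathcal{S}}=I+A_{\mathcal{S}_{n-1}}+A_{\mathcal{S}_{n-1}}A_{\mathcal{S}_{n-2}}+\cdots+A_{\mathcal{S}_{n-1}}\cdots A_{\mathcal{S}_1}$. *)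

(* Defs.v *)
From HB Require Import structures.
From mathcomp Require Import all_boot all_order all_algebra.
From mathcomp Require Export reals.
Set Implicit Arguments. Unset Strict Implicit. Unset Printing Implicit Defensive.
Import Order.TTheory GRing.Theory Num.Theory.
Local Open Scope ring_scope.

Inductive sym := symL | symR.

Definition symseq := int -> sym.

Definition periodic (S : symseq) (n : nat) : Prop := forall j : int, S (j + n%:Z)%R = S j.

Definition shiftseq (S : symseq) (i : int) : symseq := fun j => S (i + j)%R.

Definition flip (s : sym) : sym := match s with symL => symR | symR => symL end.

Definition flip0 (S : symseq) (n : nat) : symseq :=
  fun j => if (j %% n%:Z)%Z == 0 then flip (S j) else S j.

Section Mats.
Variables (R : realType) (N : nat) (AL AR : 'M[R]_N).

Definition Amat (s : sym) : 'M[R]_N := if s is symR then AR else AL.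

Fixpoint Mprod (S : symseq) (k : nat) : 'M[R]_N :=
  match k with
  | 0 => 1%:M
  | k'.+1 => Amat (S k'%:Z) *m Mprod S k'
  end.

Definition MS (S : symseq) (n : nat) : 'M[R]_N := Mprod S n.

Fixpoint tailprod (S : symseq) (n k : nat) : 'M[R]_N :=
  match k with
  | 0 => 1%:M
  | k'.+1 => tailprod S n k' *m Amat (S (n - k'.+1)%N%:Z)
  end.

(* P_S = I + A_{S_{n-1}} + A_{S_{n-1}}A_{S_{n-2}} + ... + A_{S_{n-1}}...A_{S_1} *)
Definition PS (S : symseq) (n : nat) : 'M[R]_N := \sum_(k < n) tailprod S n k.
End Mats.

Definition e1 (R : realType) (N : nat) : 'cV[R]_N := \col_i ((val i == 0%N)%:R).

(* Main.v *)
Require Import Defs.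
From HB Require Import structures.
From mathcomp Require Import all_boot all_order all_algebra.
From mathcomp Require Import reals zify ring.
From Stdlib Require Import FunctionalExtensionality.
Import Order.TTheory GRing.Theory Num.Theory.
Local Open Scope ring_scope.

Lemma L_Mtail (R : realType) (N : nat) (AL AR : 'M[R]_N) S n k :
  (k <= n)%N -> tailprod AL AR S n k *m Mprod AL AR S (n - k) = Mprod AL AR S n.
Proof.
elim: k => [|k IH] hk; first by rewrite subn0 mul1mx.
have e : (n - k = (n - k.+1).+1)%N by lia.
by rewrite -IH ?(ltnW hk) // e /= mulmxA.
Qed.

Lemma tailprodS (R : realType) (N : nat) (AL AR : 'M[R]_N) S n k :
  tailprod AL AR S n k.+1 = tailprod AL AR S n k *m Amat AL AR (S (n - k.+1)%N%:Z).
Proof. by []. Qed.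

Lemma L_tail_shift (R : realType) (N : nat) (AL AR : 'M[R]_N) S n k :
  (k < n)%N -> tailprod AL AR (shiftseq S 1) n k.+1 = Amat AL AR (S n) *m tailprod AL AR S n k.
Proof.
elim: k => [|k IH] hk.
  rewrite /= mul1mx mulmx1 /shiftseq.
  by congr (Amat _ _ (S _)); lia.
rewrite tailprodS IH ?(ltnW hk) // tailprodS -mulmxA /shiftseq.
by congr (_ *m (_ *m Amat _ _ (S _))); lia.
Qed.

Lemma L_tail_flip (R : realType) (N : nat) (AL AR : 'M[R]_N) S n k :
  (k < n)%N -> tailprod AL AR (flip0 S n) n k = tailprod AL AR S n k.
Proof.
elim: k => [|k IH] hk //=.
rewrite IH ?(ltnW hk) // /flip0 modz_nat modn_small; last by lia.
by have -> : ((n - k.+1)%N == 0%N :> int) = false by apply/eqP; lia.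
Qed.

Lemma L_tele (R : realType) (N : nat) (AL AR : 'M[R]_N) S n k :
  1%:M - tailprod AL AR S n k =
  \sum_(j < k) tailprod AL AR S n j *m (1%:M - Amat AL AR (S (n - j.+1)%N%:Z)).
Proof.
elim: k => [|k IH]; first by rewrite big_ord0 /= subrr.
rewrite big_ord_recr /= -IH mulmxBr mulmx1.
by rewrite addrA subrK.
Qed.

Lemma L_MS (R : realType) (N : nat) (AL AR : 'M[R]_N) S n :
  MS AL AR S n = tailprod AL AR S n n.
Proof. by rewrite /MS -(@L_Mtail R N AL AR S n n (leqnn n)) subnn mulmx1. Qed.

Lemma L_decomp (R : realType) (N : nat) (AL AR : 'M[R]_N) (C : 'cV[R]_N)
  (hAR : AR = AL + C *m (e1 R N)^T) S n :
  exists g : 'cV[R]_N,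
    1%:M - MS AL AR S n = PS AL AR S n *m (1%:M - AL) - g *m (e1 R N)^T.
Proof.
pose D (x : sym) : 'cV[R]_N := if x is symR then C else 0.
have hA x : 1%:M - Amat AL AR x = (1%:M - AL) - D x *m (e1 R N)^T.
  by case: x; rewrite /= ?mul0mx ?subr0 // hAR opprD addrA.
exists (\sum_(j < n) tailprod AL AR S n j *m D (S (n - j.+1)%N%:Z)).
rewrite L_MS L_tele /PS.
under eq_bigr => j _ do rewrite hA mulmxBr.
by rewrite sumrB mulmx_suml mulmx_suml; congr (_ - _); apply: eq_bigr => j _; rewrite mulmxA.
Qed.

Lemma L_shift (R : realType) (N : nat) (AL AR : 'M[R]_N) S n (w : 'rV[R]_N) :
  (0 < n)%N -> periodic S n -> w != 0 ->
  w *m (1%:M - MS AL AR S n) = 0 -> w *m PS AL AR S n = 0 ->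
  exists2 w' : 'rV[R]_N, w' != 0 &
   (w' *m (1%:M - MS AL AR (shiftseq S 1) n) = 0 /\ w' *m PS AL AR (shiftseq S 1) n = 0).
Proof.
case: n => [//|n] _ hper wn0 hM hP.
set T := tailprod AL AR S n.+1 n.
set A0 := Amat AL AR (S 0).
have hSn : S n.+1 = S 0 by rewrite -(hper 0) add0r.
have eM : MS AL AR S n.+1 = T *m A0.
  by rewrite L_MS tailprodS subnn.
have eM' : MS AL AR (shiftseq S 1) n.+1 = A0 *m T.
  rewrite L_MS; have := @L_tail_shift R N AL AR S n.+1 n (leqnn _); move=> ->; by rewrite hSn.
have eP : PS AL AR S n.+1 = \sum_(k < n) tailprod AL AR S n.+1 k + T.
  by rewrite /PS big_ord_recr.
have eP' : PS AL AR (shiftseq S 1) n.+1 = 1%:M + A0 *m \sum_(k < n) tailprod AL AR S n.+1 k.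
  rewrite /PS big_ord_recl mulmx_sumr; congr (_ + _); apply: eq_bigr => k _.
  rewrite (_ : tailprod AL AR (shiftseq S 1) n.+1 (lift ord0 k) = tailprod AL AR (shiftseq S 1) n.+1 k.+1) //.
  by rewrite L_tail_shift ?hSn //; case: k => k /= hk; lia.
have hw : w = w *m T *m A0.
  by move: hM; rewrite eM mulmxBr mulmx1 -mulmxA => /eqP; rewrite subr_eq0 => /eqP.
exists (w *m T).
  by apply: contra wn0 => /eqP h; rewrite hw h mul0mx.
split.
  by rewrite eM' mulmxBr mulmx1 !mulmxA -hw subrr.
rewrite eP' mulmxDr mulmx1 mulmxA -hw.
by move: hP; rewrite eP mulmxDr addrC.
Qed.

Lemma L_perm (S : symseq) n : periodic S n -> forall m (j : int), S (j + (m * n)%N%:Z) = S j.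
Proof.
move=> hp; elim=> [|m IH] j; first by rewrite mul0n addr0.
by rewrite mulSn PoszD addrA addrC addrA (addrC _ j) hp IH.
Qed.

Theorem lemma4p10 (R : realType) (N : nat) (hN : (2 <= N)%N)
  (AL AR : 'M[R]_N) (C B : 'cV[R]_N) (mu : R)
  (hAR : AR = AL + C *m (e1 R N)^T)
  (S : symseq) (n : nat) (hn : (0 < n)%N) (hper : periodic S n)
  (hS0 : \det (1%:M - MS AL AR (flip0 S n) n) != 0)
  (hMS : \det (1%:M - MS AL AR S n) = 0)
  (hPS : \det (PS AL AR S n) = 0)
  (hmu : mu != 0)
  (hrho : ((e1 R N)^T *m \adj (1%:M - AL)) *m B != 0) :
  forall i : int, \det (PS AL AR (shiftseq S i) n) = 0.
Proof.
set e := e1 R N.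
have /det0P [y yn0 hy] : \det (PS AL AR S n) == 0 by rewrite hPS.
have [g hg] := @L_decomp R N AL AR C hAR S n.
have hy1 : y *m (1%:M - MS AL AR S n) = - ((y *m g) *m e^T).
  by rewrite hg mulmxBr mulmxA hy mul0mx sub0r mulmxA.
have /det0P [v vn0 hv] : \det (1%:M - MS AL AR S n)^T == 0 by rewrite det_tr hMS.
set u := v^T.
have un0 : u != 0 by apply: contra vn0 => /eqP h; rewrite -(trmxK v) -/u h linear0.
have hu : (1%:M - MS AL AR S n) *m u = 0.
  by have := congr1 trmx hv; rewrite trmx_mul trmxK linear0.
pose D (x : sym) : 'cV[R]_N := if x is symR then - C else C.
have hflip x : Amat AL AR (flip x) = Amat AL AR x + D x *m e^T.
  by case: x; rewrite /= hAR // mulNmx addrK.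
case: n hn hper hS0 hMS hPS y yn0 hy g hg hy1 v vn0 hv u un0 hu => [//|n] _ hper hS0 hMS hPS y yn0 hy g hg hy1 v vn0 hv u un0 hu.
set T := tailprod AL AR S n.+1 n.
have eM : MS AL AR S n.+1 = T *m Amat AL AR (S 0) by rewrite L_MS tailprodS subnn.
have eM' : MS AL AR (flip0 S n.+1) n.+1 = MS AL AR S n.+1 + T *m D (S 0) *m e^T.
  rewrite L_MS tailprodS subnn L_tail_flip // -/T eM.
  by rewrite /flip0 mod0z eqxx hflip mulmxDr mulmxA.
have eu : e^T *m u != 0.
  apply: contra hS0 => /eqP h; rewrite -det_tr; apply/det0P; exists u^T.
    by apply: contra un0 => /eqP h2; rewrite -(trmxK u) h2 linear0.
  rewrite -trmx_mul eM' opprD addrA mulmxBl hu sub0r -(mulmxA _ e^T u) h mulmx0 oppr0.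
  exact: linear0.
have hyg : y *m g = 0.
  have h0 : (y *m g) *m (e^T *m u) = 0.
    have := congr1 (mulmx^~ u) hy1; rewrite /= -mulmxA hu mulmx0 mulNmx -mulmxA.
    by rewrite !mulmxA => /esym/eqP; rewrite oppr_eq0 => /eqP.
  move: h0 eu; rewrite (mx11_scalar (y *m g)) (mx11_scalar (e^T *m u)) -scalar_mxM.
  move=> h0 eu; have : (y *m g) 0 0 * (e^T *m u) 0 0 == 0.
    by move/matrixP: h0 => /(_ 0 0); rewrite !mxE /= mulr1n => ->.
  rewrite mulf_eq0 => /orP [/eqP -> | /eqP h1]; first by rewrite raddf0.
  by move: eu; rewrite h1 raddf0 eqxx.
have hy2 : y *m (1%:M - MS AL AR S n.+1) = 0 by rewrite hy1 hyg mul0mx oppr0.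
have hall : forall k : nat, exists2 w : 'rV[R]_N, w != 0 &
   (w *m (1%:M - MS AL AR (shiftseq S k) n.+1) = 0 /\ w *m PS AL AR (shiftseq S k) n.+1 = 0).
  elim=> [|k [w wn0 [hw1 hw2]]].
    exists y => //; rewrite (_ : shiftseq S 0 = S) //.
    by apply: functional_extensionality => j; rewrite /shiftseq add0r.
  have hpk : periodic (shiftseq S k) n.+1 by move=> j; rewrite /shiftseq addrA hper.
  have [w' w'n0 hw'] := @L_shift R N AL AR (shiftseq S k) n.+1 w (ltn0Sn n) hpk wn0 hw1 hw2.
  exists w' => //; rewrite (_ : shiftseq S k.+1 = shiftseq (shiftseq S k) 1) //.
  apply: functional_extensionality => j; rewrite /shiftseq; congr S; lia.
have hdet : forall k : nat, \det (PS AL AR (shiftseq S k) n.+1) = 0.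
  move=> k; have [w wn0 [_ hw]] := hall k; apply/eqP/det0P; by exists w.
case=> [k|m]; first exact: hdet.
rewrite (_ : shiftseq S (Negz m) = shiftseq S (m.+1 * n.+1 - m.+1)%N); first exact: hdet.
apply: functional_extensionality => j; rewrite /shiftseq.
rewrite -(@L_perm S n.+1 hper m.+1 (Negz m + j)); congr S; rewrite NegzE; nia.
Qed.
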